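(* Let $N\ge 1$, $d\ge 1$, $T>0$, $M>0$, and let $\alpha=(\alpha_1,\dots,\alpha_N)\in\mathcal U_M$. Let $(x_i,v_i)_{i=1}^N$, with $x_i(t),v_i(t)\in\mathbb R^d$, solve on $[0,T]$ $$\dot x_i=v_i,\qquad \dot v_i=-\alpha_i v_i+(1-\alpha_i)\frac1N\sum_{j=1}^N (v_j-v_i),\qquad i=1,\dots,N,$$ and let $\bar v=\frac1N\sum_i v_i$. Assume $\bar v(0)\neq 0$, put $e=\bar v(0)/\|\bar v(0)\|$, $\xi_i=\langle v_i,e\rangle$, $\bar\xi=\frac1N\sum_i\xi_i$, and assume $\xi_1(0)\ge\xi_2(0)\ge\dots\ge\xi_N(0)$. Then $\bar v(t)\neq 0$ and $\bar\xi(t)>0$ for all $t\in[0,T]$. Moreover, for every $\tau\in[0,T]$ and every $i$: if $\xi_i(\tau)\ge 0$ then $\xi_i(t)\ge 0$ for all $t\in[\tau,T]$, and if $\xi_i(\tau)>0$ then $\xi_i(t)>0$ for all $t\in[\tau,T]$.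
   Context: $\mathcal U_M$ denotes the set of measurable maps $\alpha:[0,T]\to[0,1]^N$ such that $\sum_{i=1}^N\alpha_i(t)\le M$ for all $t\in[0,T]$. (This is a collective migration model with target velocity $0$, in which $\alpha_i$ balances attraction to the target velocity against alignment with the group.) *)

(* Defs.v *)
From HB Require Import structures.
From mathcomp Require Import all_boot all_order all_algebra.
From mathcomp Require Import all_classical all_reals all_analysis.
Set Implicit Arguments. Unset Strict Implicit. Unset Printing Implicit Defensive.
Import Order.TTheory GRing.Theory Num.Theory.
Local Open Scope ring_scope.

Section Defs.
Variable R : realType.

Definition dotv (d : nat) (a b : 'rV[R]_d) : R := \sum_(k < d) a 0 k * b 0 k.
Definition normv (d : nat) (a : 'rV[R]_d) : R := Num.sqrt (dotv a a).

Definition meanv (N d : nat) (w : 'I_N -> 'rV[R]_d) : 'rV[R]_d :=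
  N%:R^-1 *: \sum_(j < N) w j.

Definition in_UM (N : nat) (T M : R) (alpha : R -> 'I_N -> R) : Prop :=
  (forall i, measurable_fun `[0, T]%classic (fun t => alpha t i)) /\
  (forall t, 0 <= t <= T -> forall i, 0 <= alpha t i <= 1) /\
  (forall t, 0 <= t <= T -> \sum_(i < N) alpha t i <= M).

Definition vrhs (N d : nat) (alpha : R -> 'I_N -> R) (v : 'I_N -> R -> 'rV[R]_d)
  (i : 'I_N) (t : R) : 'rV[R]_d :=
  - (alpha t i *: v i t)
  + (1 - alpha t i) *: (N%:R^-1 *: \sum_(j < N) (v j t - v i t)).

(* (x,v) is a (Caratheodory / absolutely continuous) solution on [0,T]:
   the right-hand sides are Lebesgue integrable on [0,T] and the integral
   form of the ODE holds componentwise. *)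
Definition is_solution (N d : nat) (T : R) (alpha : R -> 'I_N -> R)
  (x v : 'I_N -> R -> 'rV[R]_d) : Prop :=
  forall i (k : 'I_d),
    (lebesgue_measure).-integrable `[0, T]%classic
        (fun s => (v i s 0 k)%:E) /\
    (lebesgue_measure).-integrable `[0, T]%classic
        (fun s => (vrhs alpha v i s 0 k)%:E) /\
    (forall t, 0 <= t <= T ->
       (x i t 0 k)%:E = (x i 0 0 k)%:E
          + (\int[lebesgue_measure]_(s in `[0%R, t]%classic) (v i s 0 k)%:E)%E) /\
    (forall t, 0 <= t <= T ->
       (v i t 0 k)%:E = (v i 0 0 k)%:E
          + (\int[lebesgue_measure]_(s in `[0%R, t]%classic)
                (vrhs alpha v i s 0 k)%:E)%E).

End Defs.

(* Main.v *)
Require Import Defs.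
From HB Require Import structures.
From mathcomp Require Import all_boot all_order all_algebra.
From mathcomp Require Import all_classical all_reals all_analysis.
From mathcomp Require Import measurable_realfun ftc.
From mathcomp Require Import ring lra.
Import Order.TTheory GRing.Theory Num.Theory numFieldNormedType.Exports.
Local Open Scope classical_set_scope.
Local Open Scope ring_scope.

Section S.
Context {R : realType}.
Notation mu := (@lebesgue_measure R).

Definition IntRep (T : R) (w g : R -> R) :=
  mu.-integrable `[0, T] (EFin \o g) /\
  forall t, 0 <= t <= T -> w t = w 0 + \int[mu]_(s in `[0, t]) g s.

Lemma integrable_cst_itv (a b c : R) : mu.-integrable `]a, b] (EFin \o cst c).
Proof.
apply/integrableP; split; first exact/measurable_EFinP/measurable_cst.
rewrite /=.
rewrite integral_cst //= lebesgue_measure_itv /=.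
case: ifP => _; last by rewrite mule0.
by rewrite -EFinD -EFinM ltry.
Qed.

Lemma IntRep_of (T : R) (w g : R -> R) :
  mu.-integrable `[0, T] (fun s => (g s)%:E) ->
  (forall t, 0 <= t <= T -> (w t)%:E = (w 0)%:E + (\int[mu]_(s in `[0%R, t]%classic) (g s)%:E)%E) ->
  IntRep T w g.
Proof.
move=> ig H; split => // t /andP[t0 tT].
have igt : mu.-integrable `[0, t] (EFin \o g).
  apply: integrableS ig => //; apply: subset_itvl; by rewrite bnd_simp.
have := integrable_fin_num _ igt; rewrite /Rintegral.
move: (H t); rewrite t0 tT => /(_ isT).
set I := (\int[mu]_(x in _) _)%E => Ht If.
have {}If := If (measurable_itv _).
apply: EFin_inj; rewrite EFinD fineK //.
Qed.

Lemma IntRep_add T w1 g1 w2 g2 : IntRep T w1 g1 -> IntRep T w2 g2 ->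
  IntRep T (fun t => w1 t + w2 t) (fun t => g1 t + g2 t).
Proof.
move=> [i1 H1] [i2 H2]; split.
  have -> : EFin \o (fun t => g1 t + g2 t) = (EFin \o g1) \+ (EFin \o g2) by [].
  exact: integrableD.
move=> t /andP[t0 tT].
have sub : `[0, t] `<=` `[0, T] by apply: subset_itvl; rewrite bnd_simp.
rewrite RintegralD //; first last.
- exact: integrableS i2.
- exact: integrableS i1.
by rewrite H1 ?t0 ?tT // H2 ?t0 ?tT //; lra.
Qed.

Lemma IntRep_scale T c w g : IntRep T w g ->
  IntRep T (fun t => c * w t) (fun t => c * g t).
Proof.
move=> [i1 H1]; split.
  have -> : EFin \o (fun t => c * g t) = (fun t => (c%:E * (EFin \o g) t)%E) by [].
  exact: integrableZl.
move=> t /andP[t0 tT].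
have sub : `[0, t] `<=` `[0, T] by apply: subset_itvl; rewrite bnd_simp.
rewrite RintegralZl //; last exact: integrableS i1.
by rewrite H1 ?t0 ?tT // mulrDr.
Qed.

Lemma IntRep0 T : IntRep T (fun _ => 0) (fun _ => 0).
Proof.
split.
  apply/integrableP; split; first exact/measurable_EFinP/measurable_cst.
  by rewrite /= normr0 integral0 ltry.
by move=> t _; rewrite Rintegral_cst // mul0r addr0.
Qed.

Lemma IntRep_ext T w g w' g' : (forall t, w t = w' t) -> (forall t, g t = g' t) ->
  IntRep T w g -> IntRep T w' g'.
Proof.
by move=> ew eg; rewrite (funext ew) (funext eg).
Qed.
Arguments IntRep_ext {T w g w' g'}.
Arguments IntRep_add {T w1 g1 w2 g2}.

Lemma IntRep_sum T (I : Type) (s : seq I) (P : pred I) (w g : I -> R -> R) :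
  (forall i, IntRep T (w i) (g i)) ->
  IntRep T (fun t => \sum_(i <- s | P i) w i t) (fun t => \sum_(i <- s | P i) g i t).
Proof.
move=> H; elim: s => [|i s ih].
  by apply: (IntRep_ext _ _ (IntRep0 T)) => t; rewrite big_nil.
case Pi : (P i).
  apply: (IntRep_ext _ _ (IntRep_add (H i) ih)) => t; by rewrite big_cons Pi.
by apply: (IntRep_ext _ _ ih) => t; rewrite big_cons Pi.
Qed.

Lemma IntRep_mono T w g r s c : IntRep T w g -> 0 <= r -> r <= s -> s <= T ->
  (forall q, r <= q <= s -> - c <= g q) -> - c * (s - r) <= w s - w r.
Proof.
move=> [ig H] r0 rs sT hg.
have s0 : 0 <= s by exact: le_trans rs.
have igs : mu.-integrable `[0, s] (EFin \o g).
  apply: integrableS ig => //; apply: subset_itvl; by rewrite bnd_simp.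
have -> : w s - w r = \int[mu]_(q in `]r, s]) g q.
  rewrite (H s) ?s0 ?sT // (H r) ?r0 ?(le_trans rs sT) //.
  rewrite opprD addrACA subrr add0r.
  by rewrite (Rintegral_itvB igs) // bnd_simp.
have -> : - c * (s - r) = \int[mu]_(q in `]r, s]) (- c).
  rewrite Rintegral_cst //; congr (_ * _).
  have := lebesgue_measure_itv `]r, s]; rewrite /= lte_fin => ->.
  case: ltP => rs'; first by rewrite -EFinD.
  have -> : s = r by apply/le_anti; rewrite rs'.
  by rewrite subrr.
apply: le_Rintegral => //.
- exact: integrable_cst_itv.
- apply: integrableS igs => //; apply: subset_itvr; by rewrite bnd_simp.
- move=> q /=; rewrite in_itv /= => /andP[rq qs]; apply: hg; rewrite qs ltW //.
Qed.

Definition ctn_on (a b : R) (u : R -> R) :=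
  forall r, a <= r <= b -> forall e, 0 < e -> exists2 dl, 0 < dl &
    forall q, a <= q <= b -> `|q - r| < dl -> `|u q - u r| < e.

Lemma ctn_of_within a b (u : R -> R) : {within `[a,b], continuous u} -> ctn_on a b u.
Proof.
move=> /subspace_continuousP H r rab e e0.
have Ar : `[a,b]%classic r by rewrite /= in_itv.
have := (cvgrPdist_lt _ _).1 (H r Ar) e e0.
move=> Hn; have [dl /= dl0 Hd] := (nbhs_ballP _ _).1 (Hn _).
exists dl => // q qab qr.
rewrite distrC; apply: (Hd q).
  by rewrite /ball /= distrC.
by rewrite /= in_itv.
Qed.

Lemma IntRep_cont T w g : 0 <= T -> IntRep T w g -> ctn_on 0 T w.
Proof.
move=> T0 [ig H].
have := parameterized_integral_continuous T0 ig => /ctn_of_within C.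
move=> r rT e e0; have [dl dl0 Hd] := C r rT e e0.
exists dl => // q qT qr.
rewrite (H q qT) (H r rT) /parameterized_integral.
have -> : forall a b c : R, a + b - (a + c) = b - c by move=> *; lra.
exact: Hd.
Qed.

Arguments IntRep_cont {T w g}.
Arguments IntRep_mono {T w g r s c}.

Lemma ctn_barrier a b a' b' (y : R -> R) c s0 : ctn_on a b y -> a <= a' -> b' <= b ->
  ctn_on a' b' (fun q => y q - c * (1 - (q - s0))).
Proof.
move=> C aa bb r /andP[ar rb] e e0.
have rab : a <= r <= b by rewrite (le_trans aa ar) (le_trans rb bb).
have e2 : 0 < e / 2 by rewrite divr_gt0.
have [dl dl0 Hd] := C r rab _ e2.
have ce : 0 < e / 2 / (`|c| + 1) by rewrite divr_gt0 // ltr_wpDl.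
exists (Num.min dl (e / 2 / (`|c| + 1))); first by rewrite lt_min dl0 ce.
move=> q /andP[aq qb]; rewrite lt_min => /andP[qd qc].
have qab : a <= q <= b by rewrite (le_trans aa aq) (le_trans qb bb).
have h1 := Hd q qab qd.
have -> : y q - c * (1 - (q - s0)) - (y r - c * (1 - (r - s0))) =
          (y q - y r) + c * (q - r) by ring.
apply: (le_lt_trans (ler_normD _ _)); rewrite normrM.
have h2 : `|c| * `|q - r| <= `|c| * (e / 2 / (`|c| + 1)).
  by apply: ler_wpM2l => //; exact: ltW.
have h3 : `|c| * (e / 2 / (`|c| + 1)) <= e / 2.
  rewrite mulrCA -[leRHS]mulr1 ler_wpM2l ?(ltW e2) //.
  by rewrite ler_pdivrMr ?ltr_wpDl // mul1r lerDl.
lra.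
Qed.

Lemma barrier a b (u : R -> R) : ctn_on a b u -> 0 <= u a ->
  (forall r s, a <= r -> r <= s -> s <= b -> (forall q, r <= q <= s -> u q <= 0) ->
     u r <= u s) ->
  forall t, a <= t <= b -> 0 <= u t.
Proof.
move=> cu ua H t /andP[a_t tb]; rewrite leNgt; apply/negP => ut.
pose Z := [set s | a <= s <= t /\ 0 <= u s].
have Za : Z a by rewrite /Z /= lexx a_t.
have ubZ : ubound Z t by move=> s [/andP[_ ->]].
have hZ : has_sup Z by split; [exists a | exists t].
have ar : a <= sup Z := sup_upper_bound hZ Za.
have rt : sup Z <= t := ge_sup (ex_intro _ a Za) ubZ.
set r := sup Z in ar rt.
have rab : a <= r <= b by rewrite ar (le_trans rt tb).
have ur : 0 <= u r.
  rewrite leNgt; apply/negP => ur.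
  have ur' : 0 < - u r by rewrite oppr_gt0.
  have [dl dl0 Hd] := cu r rab (- u r) ur'.
  have [z [/andP[az zt] uz] rz] := sup_adherent dl0 hZ.
  have zr : z <= r by apply: sup_upper_bound => //; rewrite /Z /= az zt.
  have zab : a <= z <= b by rewrite az (le_trans zt tb).
  move: rz; rewrite -/r => rz.
  have := Hd z zab; rewrite ler0_norm ?subr_le0 // opprB.
  have := ler_norm (u z - u r); lra.
have rt' : r < t.
  rewrite lt_neqAle rt andbT; apply/eqP => rE; move: ur; rewrite rE; lra.
have uneg : forall q, r < q -> q <= t -> u q < 0.
  move=> q rq qt; rewrite ltNge; apply/negP => uq.
  have : q <= r by apply: sup_upper_bound => //; rewrite /Z /= qt uq (le_trans ar (ltW rq)).
  by rewrite leNgt rq.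
have ur0 : u r <= 0.
  rewrite leNgt; apply/negP => ur'.
  have [dl dl0 Hd] := cu r rab (u r) ur'.
  pose q := Num.min (r + dl / 2) t.
  have rq : r < q by rewrite lt_min rt' andbT ltrDl divr_gt0.
  have qt : q <= t by rewrite ge_min lexx orbT.
  have qab : a <= q <= b by rewrite (le_trans ar (ltW rq)) (le_trans qt tb).
  have qr : `|q - r| < dl.
    rewrite ger0_norm ?subr_ge0 ?(ltW rq) //.
    have : q <= r + dl / 2 by rewrite ge_min lexx.
    lra.
  have := Hd q qab qr; have := uneg q rq qt; have := ler_norm (u r - u q).
  rewrite distrC; lra.
have := H r t ar (ltW rt') tb.
have : forall q, r <= q <= t -> u q <= 0.
  move=> q /andP[rq qt]; case: (ltgtP r q) => [rq'|//|<-//].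
    exact: ltW (uneg q rq' qt).
  by move=> qr; move: rq; rewrite leNgt qr.
move=> h /(_ h); lra.
Qed.


Arguments barrier {a b u}.

Definition GoodG (T : R) (y G : R -> R) :=
  forall q c, 0 <= q -> q <= T -> 0 <= c -> y q <= c -> - c <= G q.

Lemma step T y G : 0 <= T -> IntRep T y G -> GoodG T y G ->
  forall s0 t, 0 <= s0 -> s0 <= t -> t <= T -> 0 <= y s0 ->
  y s0 * (1 - (t - s0)) <= y t.
Proof.
move=> T0 IR GG s0 t s00 s0t tT ys0.
set c := y s0.
pose u := fun q => y q - c * (1 - (q - s0)).
have C := @ctn_barrier 0 T s0 t y c s0 (IntRep_cont T0 IR) s00 tT.
have H0 : 0 <= u s0 by rewrite /u subrr subr0 mulr1 /c subrr.
have Hm : forall r s, s0 <= r -> r <= s -> s <= t ->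
    (forall q, r <= q <= s -> u q <= 0) -> u r <= u s.
  move=> r s s0r rs st hneg.
  have hm := @IntRep_mono T y G r s c IR (le_trans s00 s0r) rs (le_trans st tT).
  suff: - c * (s - r) <= y s - y r by rewrite /u; lra.
  apply: hm => q /andP[rq qs].
  apply: GG => //.
  + exact: le_trans s00 (le_trans s0r rq).
  + exact: le_trans qs (le_trans st tT).
  + have := hneg q; rewrite rq qs /u => /(_ isT).
    have : 0 <= c * (q - s0) by rewrite mulr_ge0 // subr_ge0 (le_trans s0r rq).
    lra.
have := barrier C H0 Hm t; rewrite s0t lexx /u => /(_ isT); lra.
Qed.

Arguments step {T y G}.

Lemma iter_pos T y G : 0 <= T -> IntRep T y G -> GoodG T y G ->
  forall tau, 0 <= tau -> tau <= T -> 0 <= y tau ->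
  forall n : nat, forall t, tau <= t -> t <= T -> t <= tau + n%:R / 2 ->
  y tau * (2^-1) ^+ n <= y t.
Proof.
move=> T0 IR GG tau tau0 tauT ytau; elim=> [|n IH] t taut tT tn.
  have -> : t = tau by apply/le_anti; rewrite taut andbT; move: tn; rewrite mul0r addr0.
  by rewrite expr0 mulr1.
have hp : 0 <= y tau * (2^-1) ^+ n by rewrite mulr_ge0 // exprn_ge0.
rewrite exprSr mulrA.
have h2 : 0 < (2 : R)^-1 by rewrite invr_gt0.
case: (leP t (tau + n%:R / 2)) => htn.
  have := IH t taut tT htn.
  have : y tau * (2^-1) ^+ n * 2^-1 <= y tau * (2^-1) ^+ n.
    by rewrite ler_piMr // invf_le1 // ler1n.
  lra.
set s0 := tau + n%:R / 2 in htn.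
have taus0 : tau <= s0 by rewrite lerDl divr_ge0.
have s0T : s0 <= T by exact: le_trans (ltW htn) tT.
have ys0 := IH s0 taus0 s0T (lexx _).
have := step T0 IR GG _ _ (le_trans tau0 taus0) (ltW htn) tT (le_trans hp ys0).
have : t - s0 <= 2^-1.
  move: tn; rewrite /s0 -natr1 mulrDl mul1r; lra.
move=> h1 h3.
have : y s0 * 2^-1 <= y s0 * (1 - (t - s0)).
  by apply: ler_wpM2l; [exact: le_trans hp ys0| lra].
have : y tau * (2^-1) ^+ n * 2^-1 <= y s0 * 2^-1 by apply: ler_wpM2r => //; exact: ltW.
lra.
Qed.

Arguments iter_pos {T y G}.

Lemma final_pos T y G : 0 <= T -> IntRep T y G -> GoodG T y G ->
  forall tau, 0 <= tau -> tau <= T -> forall t, tau <= t -> t <= T ->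
  (0 <= y tau -> 0 <= y t) /\ (0 < y tau -> 0 < y t).
Proof.
move=> T0 IR GG tau tau0 tauT t taut tT.
have h0 : 0 <= 2 * (T - tau) by rewrite mulr_ge0 // subr_ge0.
pose n := Num.bound (2 * (T - tau)).
have hn : t <= tau + n%:R / 2.
  have := archi_boundP h0; rewrite -/n => hb.
  have : (T - tau) <= n%:R / 2 by rewrite ler_pdivlMr //; lra.
  lra.
have hpow : 0 < (2^-1 : R) ^+ n by rewrite exprn_gt0 // invr_gt0.
split => hy.
  have := iter_pos T0 IR GG _ tau0 tauT hy _ _ taut tT hn.
  have : 0 <= y tau * 2^-1 ^+ n by rewrite mulr_ge0 // ltW.
  lra.
have := iter_pos T0 IR GG _ tau0 tauT (ltW hy) _ _ taut tT hn.
have : 0 < y tau * 2^-1 ^+ n by rewrite mulr_gt0.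
lra.
Qed.


Arguments IntRep_scale {T} c {w g}.
Arguments IntRep_sum {T I} s P {w g}.
Arguments final_pos {T y G}.

Lemma dotvD (d : nat) (a b c : 'rV[R]_d) : dotv (a + b) c = dotv a c + dotv b c.
Proof. by rewrite /dotv -big_split; apply: eq_bigr => k _; rewrite mxE mulrDl. Qed.
Lemma dotvN (d : nat) (a c : 'rV[R]_d) : dotv (- a) c = - dotv a c.
Proof. by rewrite /dotv -sumrN; apply: eq_bigr => k _; rewrite mxE mulNr. Qed.
Lemma dotvB (d : nat) (a b c : 'rV[R]_d) : dotv (a - b) c = dotv a c - dotv b c.
Proof. by rewrite dotvD dotvN. Qed.
Lemma dotvZ (d : nat) s (a c : 'rV[R]_d) : dotv (s *: a) c = s * dotv a c.
Proof. by rewrite /dotv mulr_sumr; apply: eq_bigr => k _; rewrite mxE mulrA. Qed.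
Lemma dotvZr (d : nat) s (a c : 'rV[R]_d) : dotv a (s *: c) = s * dotv a c.
Proof. by rewrite /dotv mulr_sumr; apply: eq_bigr => k _; rewrite mxE mulrCA. Qed.
Lemma dotv0 (d : nat) (c : 'rV[R]_d) : dotv 0 c = 0.
Proof. by rewrite /dotv big1 // => k _; rewrite mxE mul0r. Qed.
Lemma dotv_sum (d n : nat) (f : 'I_n -> 'rV[R]_d) c :
  dotv (\sum_(j < n) f j) c = \sum_(j < n) dotv (f j) c.
Proof.
rewrite /dotv exchange_big; apply: eq_bigr => k _; by rewrite summxE mulr_suml.
Qed.
Lemma dotv_gt0 (d : nat) (a : 'rV[R]_d) : a != 0 -> 0 < dotv a a.
Proof.
move=> a0; rewrite lt_def sumr_ge0 ?andbT; last by move=> k _; rewrite -expr2 sqr_ge0.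
apply: contra a0 => /eqP /psumr_eq0P h; apply/eqP/rowP => k.
have := h (fun j _ => ltac:(by rewrite -expr2 sqr_ge0)) k isT.
by rewrite mxE; move/eqP; rewrite mulf_eq0 orbb => /eqP.
Qed.

End S.
Arguments IntRep_of {R T w g}.
Arguments IntRep_ext {R T w g w' g'}.
Arguments IntRep_scale {R T} c {w g}.
Arguments IntRep_sum {R T I} s P {w g}.
Arguments final_pos {R T y G}.

Theorem proposition1 (R : realType) (N d : nat) (T M : R)
  (alpha : R -> 'I_N -> R) (x v : 'I_N -> R -> 'rV[R]_d) :
  (0 < N)%N -> (0 < d)%N -> 0 < T -> 0 < M ->
  in_UM T M alpha ->
  is_solution T alpha x v ->
  meanv (fun j => v j 0) != 0 ->
  let e := (normv (meanv (fun j => v j 0)))^-1 *: meanv (fun j => v j 0) in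
  let xi := fun (i : 'I_N) (t : R) => dotv (v i t) e in
  let xibar := fun t : R => N%:R^-1 * \sum_(i < N) xi i t in
  (forall i j : 'I_N, (i <= j)%N -> xi j 0 <= xi i 0) ->
  (forall t, 0 <= t <= T -> meanv (fun j => v j t) != 0 /\ 0 < xibar t) /\
  (forall (tau : R) (i : 'I_N), 0 <= tau <= T ->
     (0 <= xi i tau -> forall t, tau <= t <= T -> 0 <= xi i t) /\
     (0 < xi i tau -> forall t, tau <= t <= T -> 0 < xi i t)).
Proof.
move=> N0 d0 T0 M0 [_ [Ha _]] sol vb0 e xi xibar _.
have T0' : 0 <= T := ltW T0.
have IRk : forall i k, IntRep T (fun t => v i t 0 k) (fun s => vrhs alpha v i s 0 k).
  by move=> i k; have [_ [i2 [_ i4]]] := sol i k; exact: IntRep_of i2 i4.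
pose Gi := fun i s => dotv (vrhs alpha v i s) e.
have IRxi : forall i, IntRep T (xi i) (Gi i).
  move=> i.
  have := IntRep_sum (index_enum 'I_d) xpredT (fun k => IntRep_scale (e 0 k) (IRk i k)).
  apply: IntRep_ext => t;
  by rewrite /xi /Gi /dotv; apply: eq_bigr => k _; rewrite mulrC.
pose Ninv : R := N%:R^-1.
have hN : Ninv * N%:R = 1 by rewrite mulVf // pnatr_eq0 -lt0n.
pose Gbar := fun s => Ninv * \sum_(i < N) Gi i s.
have IRbar : IntRep T xibar Gbar.
  apply: (IntRep_ext _ _ (IntRep_scale Ninv (IntRep_sum (index_enum 'I_N) xpredT IRxi)))
    => t //.
have key : forall i s, Gi i s = - xi i s + (1 - alpha s i) * xibar s.
  move=> i s; rewrite /Gi /vrhs dotvD dotvN !dotvZ dotv_sum.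
  under eq_bigr do rewrite dotvB.
  rewrite sumrB sumr_const card_ord -[dotv (v i s) e *+ N]mulr_natr /xibar /xi -/Ninv.
  rewrite mulrBr [dotv (v i s) e * _]mulrC mulrA hN mul1r.
  ring.
have xibarE : forall t, xibar t = dotv (meanv (fun j => v j t)) e.
  by move=> t; rewrite /meanv dotvZ dotv_sum.
have GGbar : GoodG T xibar Gbar.
  move=> q c q0 qT c0 hq.
  pose B := Ninv * \sum_(i < N) (1 - alpha q i).
  have hqT : 0 <= q <= T by rewrite q0 qT.
  have hS0 : 0 <= \sum_(i < N) (1 - alpha q i).
    by apply: sumr_ge0 => i _; have /andP[_ ?] := Ha q hqT i; rewrite subr_ge0.
  have hS1 : \sum_(i < N) (1 - alpha q i) <= N%:R.
    have : \sum_(i < N) (1 - alpha q i) <= \sum_(i < N) (1 : R).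
      by apply: ler_sum => i _; have /andP[? _] := Ha q hqT i; lra.
    by rewrite sumr_const card_ord.
  have hNp : 0 < N%:R :> R by rewrite ltr0n.
  have B0 : 0 <= B by rewrite mulr_ge0 // invr_ge0 ltW.
  have B1 : B <= 1 by rewrite /B mulrC ler_pdivrMr // mul1r.
  have -> : Gbar q = - xibar q + B * xibar q.
    rewrite /Gbar; under eq_bigr do rewrite key.
    rewrite big_split /= sumrN -mulr_suml /B /xibar -/Ninv; ring.
  have := mulr_ge0 (ltac:(lra) : 0 <= 1 - B) (ltac:(lra) : 0 <= c - xibar q).
  have := mulr_ge0 B0 c0.
  lra.
have xb0 : 0 < xibar 0.
  rewrite xibarE /e /normv dotvZr mulr_gt0 // ?dotv_gt0 //.
  by rewrite invr_gt0 sqrtr_gt0 dotv_gt0.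
have xbpos : forall t, 0 <= t <= T -> 0 < xibar t.
  move=> t /andP[t0 tT].
  exact: ((final_pos T0' IRbar GGbar 0 (lexx 0) T0' t t0 tT).2 xb0).
split.
  move=> t tT; split; last exact: xbpos.
  apply/eqP => h; have := xbpos t tT; rewrite xibarE h dotv0 ltxx.
  by [].
move=> tau i /andP[tau0 tauT].
have GGi : GoodG T (xi i) (Gi i).
  move=> q c q0 qT c0 hq; rewrite key.
  have hqT : 0 <= q <= T by rewrite q0 qT.
  have /andP[_ a1] := Ha q hqT i.
  have := mulr_ge0 (ltac:(lra) : 0 <= 1 - alpha q i) (ltW (xbpos q hqT)).
  lra.
split.
  move=> h t /andP[taut tT].
  exact: ((final_pos T0' (IRxi i) GGi tau tau0 tauT t taut tT).1 h).
move=> h t /andP[taut tT].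
exact: ((final_pos T0' (IRxi i) GGi tau tau0 tauT t taut tT).2 h).
Qed.
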